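(* Assume $d(\eta,\cdot)$ attains its minimum over $\mathcal G$ at $g^*=g^{(\theta^* )}$ with $\theta^*\neq0$, and let $g^{bf}$ be the maximum-entropy element of $P$. Let $g^{ds}\in\Delta_k^n$ be any OCDS prediction and $g^{ds*}=g^{ds}(w^*,b^*_{1:p})$ (assuming its parameters lie in $(0,1)$). If $$\|\epsilon\|_\infty\le\frac{d(\eta,g^{ds*})-d(\eta,g^* )+d(\eta,g^{ds})-d(\eta,g^{ds*})}{2\|\theta^*\|_1},$$ then $d(\eta,g^{bf})\le d(\eta,g^{ds})$.
   Context: Standard setup. Let $n\ge1$, $k\ge2$, $p\ge1$ be integers and $m=p+k$. There are $n$ data points $x_1,\dots,x_n$ and $p$ rules $h^{(1)},\dots,h^{(p)}$, each a map from $\{x_1,\dots,x_n\}$ to $\{1,\dots,k\}\cup\{?\}$, where ''?'' means abstain. Let $n_j\ge1$ be the number of indices $i$ with $h^{(j)}(x_i)\neq ?$. $\Delta_k$ denotes the probability simplex in $\mathbb{R}^k$; an element $z\in\Delta_k^n\subset\mathbb{R}^{nk}$ is written $z=(z_1,\dots,z_n)$ with $z_i=(z_{i1},\dots,z_{ik})\in\Delta_k$. For $j\le p$ let $h^{(j)}\in\{0,1\}^{nk}$ also denote the vector with $h^{(j)}_{i\ell}=1$ iff $h^{(j)}(x_i)=\ell$; for $\ell\le k$ let $\vec e^{\,n}_\ell\in\{0,1\}^{nk}$ have entries $(\vec e^{\,n}_\ell)_{i\ell'}=\mathbf 1(\ell'=\ell)$. The matrix $A\in\mathbb{R}^{m\times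 nk}$ has rows $a^{(j)}=h^{(j)}/n_j$ for $1\le j\le p$ and $a^{(p+\ell)}=\vec e^{\,n}_\ell/n$ for $1\le\ell\le k$. For $\theta\in\mathbb{R}^m$ put $a^{(\theta)}=A^\top\theta\in\mathbb{R}^{nk}$ (entries $a^{(\theta)}_{i\ell}$) and define $g^{(\theta)}\in\Delta_k^n$ by $g^{(\theta)}_{i\ell}=\exp(a^{(\theta)}_{i\ell})/\sum_{\ell'=1}^k\exp(a^{(\theta)}_{i\ell'})$; let $\mathcal G=\{g^{(\theta)}:\theta\in\mathbb{R}^m\}$. A fixed ''true labeling'' $\eta\in\Delta_k^n$ is given and $b^*:=A\eta\in\mathbb{R}^m$; write $b^*_j$ ($j\le p$) for the empirical rule accuracies and $w^*_\ell:=b^*_{p+\ell}$ for the empirical class frequencies. Given $b\in\mathbb{R}^m$ and $\epsilon\in\mathbb{R}^m$ with $\epsilon\ge0$ and $b-\epsilon\le b^*\le b+\epsilon$ (entrywise), let $P=\{z\in\Delta_k^n:\ b-\epsilon\le Az\le b+\epsilon\}$ (entrywise). The maximum-entropy element of $P$ is the unique minimizer of $\sum_{i,\ell}z_{i\ell}\log z_{i\ell}$ over $P$ (with $0\log0=0$). For $\mu,\nu\in\Delta_k^n$, $d(\mu,\nu)=\sum_{i=1}^n\mathrm{KL}(\mu_i\|\nu_i)=\sum_{i,\ell}\mu_{i\ell}\log(\mu_{i\ell}/\nu_{i\ell})$, with $0\log(0/x)=0$. One-coin Dawid–Skene (OCDS) prediction: for class frequencies $w\in\Delta_k$ and rule accuracies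 $b\in(0,1)^p$, $g^{ds}(w,b)\in\Delta_k^n$ is defined by $g^{ds}(w,b)_{i\ell}=\widehat g_{i\ell}/\sum_{\ell'}\widehat g_{i\ell'}$ where $\widehat g_{i\ell}=w_\ell\prod_{j:\,h^{(j)}(x_i)=\ell}b_j\prod_{j:\,h^{(j)}(x_i)\notin\{\ell,?\}}\frac{1-b_j}{k-1}$; an OCDS prediction is any $g^{ds}(w,b)$ of this form or a limit in $\Delta_k^n$ of such. *)

(* Defs.v *)
From HB Require Import structures.
From mathcomp Require Import all_boot all_order all_algebra.
From mathcomp Require Import all_classical all_reals all_analysis.
Set Implicit Arguments. Unset Strict Implicit. Unset Printing Implicit Defensive.
Import Order.TTheory GRing.Theory Num.Theory.
Local Open Scope ring_scope.

Section Defs.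
Variable R : realType.
Variables n k p : nat.

(* Data points are indexed by 'I_n, classes by 'I_k, rules by 'I_p.
   A rule is h j : 'I_n -> option 'I_k, where None means "abstain" (?).
   Rows of A (m = p + k of them) are indexed by 'I_p + 'I_k:
   inl j is row j (rule j), inr l is row p + l (class l). *)
Definition rules := 'I_p -> 'I_n -> option 'I_k.
Definition vecnk := 'I_n -> 'I_k -> R.
Definition vecm := 'I_p + 'I_k -> R.

Definition in_simplex (z : vecnk) : Prop :=
  forall i, (forall l, 0 <= z i l) /\ \sum_(l < k) z i l = 1.

Definition nj (h : rules) (j : 'I_p) : nat := #|[set i | h j i != None]|.

Definition Arow (h : rules) (r : 'I_p + 'I_k) (i : 'I_n) (l : 'I_k) : R :=
  match r with
  | inl j => (h j i == Some l)%:R / (nj h j)%:R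
  | inr l' => (l == l')%:R / n%:R
  end.

Definition Amul (h : rules) (z : vecnk) : vecm :=
  fun r => \sum_(i < n) \sum_(l < k) Arow h r i l * z i l.

Definition atheta (h : rules) (th : vecm) : vecnk :=
  fun i l => \sum_(r : 'I_p + 'I_k) th r * Arow h r i l.

Definition gtheta (h : rules) (th : vecm) : vecnk :=
  fun i l => expR (atheta h th i l) / \sum_(l' < k) expR (atheta h th i l').

Definition kl_term (a b : R) : \bar R :=
  if a == 0 then 0%E else if b <= 0 then +oo%E else (a * ln (a / b))%:E.

Definition dKL (mu nu : vecnk) : \bar R :=
  (\sum_(i < n) \sum_(l < k) kl_term (mu i l) (nu i l))%E.

Definition xlogx (x : R) : R := if x == 0 then 0 else x * ln x.

Definition negent (z : vecnk) : R := \sum_(i < n) \sum_(l < k) xlogx (z i l).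

Definition inP (h : rules) (b eps : vecm) (z : vecnk) : Prop :=
  in_simplex z /\ forall r, b r - eps r <= Amul h z r <= b r + eps r.

Definition is_maxent (h : rules) (b eps : vecm) (g : vecnk) : Prop :=
  inP h b eps g /\ forall z, inP h b eps z -> negent g <= negent z.

Definition ghat (h : rules) (w : 'I_k -> R) (bb : 'I_p -> R) : vecnk :=
  fun i l => w l * (\prod_(j < p | h j i == Some l) bb j)
                 * (\prod_(j < p | (h j i != Some l) && (h j i != None))
                       ((1 - bb j) / (k%:R - 1))).

Definition gds (h : rules) (w : 'I_k -> R) (bb : 'I_p -> R) : vecnk :=
  fun i l => ghat h w bb i l / \sum_(l' < k) ghat h w bb i l'.

Definition ocds_param (w : 'I_k -> R) (bb : 'I_p -> R) : Prop :=
  (forall l, 0 <= w l) /\ \sum_(l < k) w l = 1 /\ (forall j, 0 < bb j < 1).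

(* g is an OCDS prediction: g in Delta_k^n and g is a limit of
   predictions g^ds(w,b) with admissible parameters (closure, in the
   sup-distance on the finite-dimensional space R^{nk}) *)
Definition is_ocds (h : rules) (g : vecnk) : Prop :=
  in_simplex g /\
  forall e : R, 0 < e -> exists w bb, ocds_param w bb /\
     forall i l, `|gds h w bb i l - g i l| < e.

Definition norm1 (th : vecm) : R := \sum_(r : 'I_p + 'I_k) `|th r|.
Definition norminf (v : vecm) : R := \big[Num.max/0]_(r : 'I_p + 'I_k) `|v r|.

End Defs.

(* Main.v *)
Require Import Defs.
From HB Require Import structures.
From mathcomp Require Import all_boot all_order all_algebra.
From mathcomp Require Import all_classical all_reals all_analysis.
From mathcomp Require Import ring lra.
Import Order.TTheory GRing.Theory Num.Theory.
Local Open Scope ring_scope.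

Section RealLemmas.
Variable R : realType.
Implicit Types x y a t : R.

Lemma ln_le_sub1 x : 0 < x -> ln x <= x - 1.
Proof.
move=> x0; have := @le_ln1Dx R (x - 1).
rewrite addrCA subrr addr0; apply; lra.
Qed.

Lemma lndiff_le x y : 0 < x -> 0 < y -> ln x - ln y <= (x - y) / y.
Proof.
move=> x0 y0; rewrite -ln_div ?posrE //.
have := @ln_le_sub1 (x / y) (divr_gt0 x0 y0).
by rewrite mulrBl divff ?gt_eqF.
Qed.

Lemma gibbs a y : 0 <= a -> 0 < y -> a * ln y - a * ln a <= y - a.
Proof.
move=> a0 y0; have [->|ap] := eqVneq a 0; first by rewrite !mul0r subr0 subr0 ltW.
have a0' : 0 < a by rewrite lt_def ap.
rewrite -mulrBr; have := @lndiff_le y a y0 a0'.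
move=> H; have := ler_wpM2l a0 H.
by rewrite mulrCA divff ?mulr1.
Qed.

Lemma xlogxE x : xlogx x = x * ln x.
Proof. by rewrite /xlogx; case: eqP => [->|]; rewrite ?mul0r. Qed.

End RealLemmas.

Section RL2.
Variable R : realType.

Lemma entry_bound (e g t : R) : 0 <= e -> 0 <= g -> 0 < t -> t <= 1/2 ->
  (e - g) * ln (g + t * (e - g)) <=
  (e - g) * ln g + t * (2 * (e - g) ^+ 2 / g)
  + ln t * (if g == 0 then e else 0) + (if g == 0 then e * ln e else 0).
Proof.
move=> e0 g0 t0 th.
have [->|gn] := eqVneq g 0.
  rewrite invr0 !mulr0 subr0 (ln0 (lexx 0)) !mulr0 !add0r.

  have [->|en] := eqVneq e 0; first by rewrite !mul0r !mulr0 addr0.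
  have ep : 0 < e by rewrite lt_def en.
  rewrite lnM ?posrE // mulrDr; lra.
have gp : 0 < g by rewrite lt_def gn.
rewrite mulr0 !addr0.
set z := g + t * (e - g).
have zg : g / 2 <= z by rewrite /z; nra.
have zp : 0 < z by lra.
suff : (e - g) * (ln z - ln g) <= t * (2 * (e - g) ^+ 2 / g) by lra.
have [eg|eg] := leP g e.
  have H := @lndiff_le R z g zp gp.
  have eg0 : 0 <= e - g by lra.
  have := ler_wpM2l eg0 H.
  have -> : z - g = t * (e - g) by rewrite /z; ring.
  move=> H2; apply: (le_trans H2).
  have E1 : (e - g) * (t * (e - g) / g) = t * (e - g) ^+ 2 / g by rewrite expr2; ring.
  have E2 : t * (2 * (e - g) ^+ 2 / g) = 2 * (t * (e - g) ^+ 2 / g) by ring.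
  have N : 0 <= t * (e - g) ^+ 2 / g.
    by apply: divr_ge0; [apply: mulr_ge0; [lra| apply: sqr_ge0]| lra].
  rewrite E1 E2; lra.
have H := @lndiff_le R g z gp zp.
have gme : 0 <= g - e by lra.
have := ler_wpM2l gme H.
have -> : g - z = t * (g - e) by rewrite /z; ring.
move=> H2.
have -> : (e - g) * (ln z - ln g) = (g - e) * (ln g - ln z) by ring.
apply: (le_trans H2).
have iz : z^-1 <= 2 / g.
  rewrite -[2 / g]invf_div; rewrite lef_pV2 ?posrE //; last by apply: divr_gt0.
have E3 : (g - e) * (t * (g - e) / z) = (t * (e - g) ^+ 2) * z^-1 by rewrite expr2; ring.
have E4 : t * (2 * (e - g) ^+ 2 / g) = (t * (e - g) ^+ 2) * (2 / g) by ring.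
rewrite E3 E4; apply: ler_wpM2l => //.
by apply: mulr_ge0; [lra| apply: sqr_ge0].
Qed.

End RL2.

Section RL3.
Variable R : realType.

Lemma limit_M (D C M E : R) : 0 <= C -> 0 <= M ->
  (forall t, 0 < t -> t <= 1/2 -> 0 <= D + t * C + ln t * M + E) -> M = 0.
Proof.
move=> C0 M0 H; apply/eqP; apply: contraT => Mn.
have Mp : 0 < M by rewrite lt_def Mn.
set K := `|D| + C + `|E| + 1.
set t := Num.min (1/2 : R) (expR (- (K / M))).
have tp : 0 < t by rewrite /t lt_min expR_gt0; apply/andP; split => //; lra.
have th : t <= 1/2 by rewrite /t ge_min lexx.
have te : t <= expR (- (K / M)) by rewrite /t ge_min lexx orbT.
have lt : ln t <= - (K / M).
  by rewrite -[X in _ <= X]expRK ler_ln ?posrE ?expR_gt0.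
have lM : ln t * M <= - K.
  have := ler_wpM2r M0 lt; rewrite mulNr mulrAC -mulrA divff ?mulr1 //.
have tC : t * C <= C by rewrite -[X in _ <= X]mul1r ler_wpM2r //; lra.
have := H t tp th.
have := ler_norm D; have := ler_norm E.
rewrite /K in lM; lra.
Qed.

Lemma limit_D (D C : R) : 0 <= C ->
  (forall t, 0 < t -> t <= 1/2 -> 0 <= D + t * C) -> 0 <= D.
Proof.
move=> C0 H; rewrite leNgt; apply/negP => Dn.
set t := Num.min (1/2 : R) (- D / (2 * (C + 1))).
have q : 0 < - D / (2 * (C + 1)) by apply: divr_gt0; lra.
have tp : 0 < t by rewrite /t lt_min q; apply/andP; split => //; lra.
have th : t <= 1/2 by rewrite /t ge_min lexx.
have te : t <= - D / (2 * (C + 1)) by rewrite /t ge_min lexx orbT.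
have tC : t * C <= - D / (2 * (C + 1)) * C by apply: ler_wpM2r.
have e : - D / (2 * (C + 1)) * C <= - D / 2.
  have -> : - D / (2 * (C + 1)) * C = (- D / 2) * (C / (C + 1)).
    by field; lra.
  have c1 : C / (C + 1) <= 1 by rewrite ler_pdivrMr; lra.
  have := ler_wpM2l (_ : 0 <= - D / 2) c1; rewrite mulr1; apply; lra.
have := H t tp th; lra.
Qed.

End RL3.

Lemma entry_conv (R : realType) (e g t : R) : 0 <= e -> 0 <= g -> 0 < t -> t < 1 ->
  (g + t * (e - g)) * ln (g + t * (e - g)) <=
  g * ln g + t * ((e - g) * ln (g + t * (e - g))) + t * (e - g).
Proof.
move=> e0 g0 t0 t1.
set z := g + t * (e - g).
have z0 : 0 <= z by rewrite /z; nra.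
have [zz|zp] := eqVneq z 0.
  have g00 : g = 0 by move: zz; rewrite /z => /eqP; nra.
  have e00 : e = 0 by move: zz; rewrite /z => /eqP; nra.
  by rewrite zz g00 e00 !(mul0r, mulr0, subr0, addr0).
have zp' : 0 < z by rewrite lt_def zp.
have := @gibbs R g z g0 zp'.
rewrite mulrA.
have -> : t * (e - g) = z - g by rewrite /z; ring.
move=> H.
have : z * ln z = g * ln g + (z - g) * ln z + (g * ln z - g * ln g) by ring.
move=> ->; lra.
Qed.

Section Main.
Variables (R : realType) (n k p : nat) (h : rules n k p) (b eps : vecm R k p).
Variables (eta g : vecnk R n k).

Definition comb (t : R) : vecnk R n k := fun i l => g i l + t * (eta i l - g i l).

Lemma Amul_comb t r : Amul h (comb t) r = Amul h g r + t * (Amul h eta r - Amul h g r).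
Proof.
rewrite /Amul /comb mulrBr !mulr_sumr -sumrB -big_split /=; apply: eq_bigr => i _.
rewrite !mulr_sumr -sumrB -big_split /=; apply: eq_bigr => l _.
ring.
Qed.

Lemma inP_comb t : inP h b eps g -> inP h b eps eta -> 0 <= t <= 1 -> inP h b eps (comb t).
Proof.
move=> [sg Ag] [se Ae] /andP[t0 t1]; split.
  move=> i; have [g0 g1] := sg i; have [e0 e1] := se i; split.
    move=> l; rewrite /comb; have := g0 l; have := e0 l; nra.
  rewrite /comb big_split /= -mulr_sumr sumrB g1 e1; ring.
move=> r; rewrite Amul_comb; have /andP[a1 a2] := Ag r; have /andP[a3 a4] := Ae r.
apply/andP; split; nra.
Qed.

Hypotheses (Hg : is_maxent h b eps g) (He : inP h b eps eta).

Lemma rowsum0 : \sum_(i < n) \sum_(l < k) (eta i l - g i l) = 0.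
Proof.
apply: big1 => i _; rewrite sumrB.
have [_ ->] := He.1 i; have [_ ->] := Hg.1.1 i; by rewrite subrr.
Qed.

Lemma step1a t : 0 < t -> t <= 1/2 ->
  0 <= \sum_(i < n) \sum_(l < k) (eta i l - g i l) * ln (comb t i l).
Proof.
move=> t0 th.
have Pz := @inP_comb t Hg.1 He (_ : 0 <= t <= 1).
have Hle := Hg.2 _ (Pz ltac:(apply/andP; split; lra)).
have bound : negent (comb t) <= \sum_(i < n) \sum_(l < k)
   (xlogx (g i l) + t * ((eta i l - g i l) * ln (comb t i l)) + t * (eta i l - g i l)).
  rewrite /negent; apply: ler_sum => i _; apply: ler_sum => l _.
  rewrite !xlogxE /comb; apply: entry_conv; try lra.
  - by have [e0 _] := He.1 i; apply: e0.
  - by have [g0 _] := Hg.1.1 i; apply: g0.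
have E : \sum_(i < n) \sum_(l < k)
   (xlogx (g i l) + t * ((eta i l - g i l) * ln (comb t i l)) + t * (eta i l - g i l))
   = negent g + t * (\sum_(i < n) \sum_(l < k) (eta i l - g i l) * ln (comb t i l))
     + t * (\sum_(i < n) \sum_(l < k) (eta i l - g i l)).
  rewrite /negent !mulr_sumr -!big_split /=; apply: eq_bigr => i _.
  by rewrite !mulr_sumr -!big_split.
rewrite E rowsum0 mulr0 addr0 in bound.
have : 0 <= t * (\sum_(i < n) \sum_(l < k) (eta i l - g i l) * ln (comb t i l)) by lra.
by rewrite pmulr_rge0.
Qed.

Lemma e_ge0 i l : 0 <= eta i l. Proof. by have [e0 _] := He.1 i; apply: e0. Qed.
Lemma g_ge0 i l : 0 <= g i l. Proof. by have [g0 _] := Hg.1.1 i; apply: g0. Qed.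

Lemma step1 : and (forall i l, g i l = 0 -> eta i l = 0)
  (0 <= \sum_(i < n) \sum_(l < k) (eta i l - g i l) * ln (g i l)).
Proof.
set D := \sum_(i < n) \sum_(l < k) (eta i l - g i l) * ln (g i l).
set C := \sum_(i < n) \sum_(l < k) (2 * (eta i l - g i l) ^+ 2 / g i l).
set M := \sum_(i < n) \sum_(l < k) (if g i l == 0 then eta i l else 0).
set Ef := \sum_(i < n) \sum_(l < k) (if g i l == 0 then eta i l * ln (eta i l) else 0).
have key t : 0 < t -> t <= 1/2 -> 0 <= D + t * C + ln t * M + Ef.
  move=> t0 th; apply: (le_trans (@step1a t t0 th)).
  have -> : D + t * C + ln t * M + Ef = \sum_(i < n) \sum_(l < k)
     ((eta i l - g i l) * ln (g i l) + t * (2 * (eta i l - g i l) ^+ 2 / g i l)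
      + ln t * (if g i l == 0 then eta i l else 0)
      + (if g i l == 0 then eta i l * ln (eta i l) else 0)).
    rewrite /D /C /M /Ef !mulr_sumr -!big_split /=; apply: eq_bigr => i _.
    by rewrite !mulr_sumr -!big_split.
  apply: ler_sum => i _; apply: ler_sum => l _.
  by apply: entry_bound => //; [apply: e_ge0|apply: g_ge0].
have C0 : 0 <= C.
  apply: sumr_ge0 => i _; apply: sumr_ge0 => l _.
  apply: divr_ge0 (g_ge0 i l); apply: mulr_ge0 => //; apply: sqr_ge0.
have M0' i l : 0 <= (if g i l == 0 then eta i l else 0) by case: ifP => _; rewrite ?e_ge0.
have M0 : 0 <= M by apply: sumr_ge0 => i _; apply: sumr_ge0 => l _.
have MM := @limit_M R D C M Ef C0 M0 key.
have z i l : g i l = 0 -> eta i l = 0.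
  move=> gz.
  have S1 := psumr_eq0P (fun i _ => sumr_ge0 _ (fun l _ => M0' i l)) MM.
  have := psumr_eq0P (fun l _ => M0' i l) (S1 i isT) isT.
  by move=> /(_ l); rewrite gz eqxx.
split => //.
have Ef0 : Ef = 0.
  apply: big1 => i _; apply: big1 => l _.
  by case: eqP => // /z ->; rewrite mul0r.
apply: (@limit_D R D C C0) => t t0 th.
by have := key t t0 th; rewrite MM Ef0 mulr0 !addr0.
Qed.

End Main.

Lemma KLE (R : realType) (a c : R) : 0 <= a -> 0 <= c -> (c = 0 -> a = 0) ->
  kl_term a c = (a * ln a - a * ln c)%:E.
Proof.
move=> a0 c0 ca; rewrite /kl_term.
have [->|an] := eqVneq a 0; first by rewrite !mul0r subr0.
have cp : 0 < c.
  rewrite lt_def c0 andbT; apply/eqP => cz; by move: an; rewrite (ca cz) eqxx.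
have ap : 0 < a by rewrite lt_def an a0.
by rewrite leNgt cp /= ln_div ?posrE // mulrBr.
Qed.

Lemma dKL_real (R : realType) n k (mu nu : vecnk R n k) :
  (forall i l, 0 <= mu i l) -> (forall i l, 0 <= nu i l) ->
  (forall i l, nu i l = 0 -> mu i l = 0) ->
  dKL mu nu = (\sum_(i < n) \sum_(l < k) (mu i l * ln (mu i l) - mu i l * ln (nu i l)))%:E.
Proof.
move=> m0 n0 z; rewrite /dKL -sumEFin; apply: eq_bigr => i _.
rewrite -sumEFin; apply: eq_bigr => l _; exact: KLE (m0 i l) (n0 i l) (z i l).
Qed.

Lemma le_norminf (R : realType) k p (v : vecm R k p) r : `|v r| <= norminf v.
Proof. by rewrite /norminf (bigD1 r) //= le_max lexx. Qed.

Section Gth.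
Variables (R : realType) (n k p : nat) (h : rules n k p) (th : vecm R k p).
Hypothesis k1 : (1 <= k)%N.

Definition Zi (i : 'I_n) : R := \sum_(l' < k) expR (atheta h th i l').

Lemma Zi_gt0 i : 0 < Zi i.
Proof.
rewrite /Zi (bigD1 (Ordinal k1)) //=; apply: ltr_pwDl; first exact: expR_gt0.
by apply: sumr_ge0 => l _; apply: ltW; apply: expR_gt0.
Qed.

Lemma gth_gt0 i l : 0 < gtheta h th i l.
Proof. by rewrite /gtheta; apply: divr_gt0; [apply: expR_gt0 | apply: Zi_gt0]. Qed.

Lemma gth_sum i : \sum_(l < k) gtheta h th i l = 1.
Proof.
rewrite /gtheta -mulr_suml; apply: divff; exact: lt0r_neq0 (Zi_gt0 i).
Qed.

Lemma ln_gth i l : ln (gtheta h th i l) = atheta h th i l - ln (Zi i).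
Proof. by rewrite /gtheta ln_div ?posrE ?expR_gt0 ?Zi_gt0 // expRK. Qed.

End Gth.

Section Bound.
Variables (R : realType) (n k p : nat) (h : rules n k p) (b eps : vecm R k p).
Variables (eta g : vecnk R n k) (th : vecm R k p).
Hypotheses (Hg : is_maxent h b eps g) (He : inP h b eps eta) (k1 : (1 <= k)%N).

Lemma sum_lnG : \sum_(i < n) \sum_(l < k) (eta i l - g i l) * ln (gtheta h th i l)
  = \sum_r th r * (Amul h eta r - Amul h g r).
Proof.
transitivity (\sum_(i < n) \sum_(l < k) (eta i l - g i l) * atheta h th i l
   - \sum_(i < n) ln (@Zi R n k p h th i) * \sum_(l < k) (eta i l - g i l)).
  rewrite -sumrB; apply: eq_bigr => i _.
  rewrite mulr_sumr -sumrB; apply: eq_bigr => l _.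
  rewrite (@ln_gth R n k p h th k1); ring.
rewrite [X in _ - X]big1 ?subr0; last first.
  move=> i _; rewrite sumrB.
  have [_ ->] := He.1 i; have [_ ->] := Hg.1.1 i; by rewrite subrr mulr0.
transitivity (\sum_r \sum_(i < n) \sum_(l < k) th r * Arow R h r i l * (eta i l - g i l)).
  rewrite [RHS]exchange_big /=; apply: eq_bigr => i _.
  rewrite [RHS]exchange_big /=; apply: eq_bigr => l _.
  rewrite /atheta mulr_sumr; apply: eq_bigr => r _; ring.
apply: eq_bigr => r _; rewrite /Amul -sumrB mulr_sumr; apply: eq_bigr => i _.
rewrite -sumrB mulr_sumr; apply: eq_bigr => l _; ring.
Qed.

Lemma bound_lnG : \sum_r th r * (Amul h eta r - Amul h g r) <= 2 * norminf eps * norm1 th.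
Proof.
rewrite /norm1 mulr_sumr; apply: ler_sum => r _.
have /andP[a1 a2] := He.2 r; have /andP[a3 a4] := Hg.1.2 r.
have en := @le_norminf R k p eps r; have en' := ler_norm (eps r).
have hd : `|Amul h eta r - Amul h g r| <= 2 * norminf eps.
  rewrite ler_norml; apply/andP; split; lra.
apply: (le_trans (ler_norm _)); rewrite normrM mulrC.
by apply: ler_wpM2r.
Qed.

Lemma gibbs_sum : \sum_(i < n) \sum_(l < k)
   (g i l * ln (gtheta h th i l) - g i l * ln (g i l)) <= 0.
Proof.
apply: (@le_trans _ _ (\sum_(i < n) \sum_(l < k) (gtheta h th i l - g i l))).
  apply: ler_sum => i _; apply: ler_sum => l _; apply: gibbs.
  - by have [g0 _] := Hg.1.1 i; apply: g0.
  - exact: (@gth_gt0 R n k p h th k1).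
rewrite le_eqVlt; apply/orP; left; apply/eqP; apply: big1 => i _.
by rewrite sumrB (@gth_sum R n k p h th k1); have [_ ->] := Hg.1.1 i; rewrite subrr.
Qed.

Lemma main_real : \sum_(i < n) \sum_(l < k) (eta i l * ln (eta i l) - eta i l * ln (g i l))
  <= \sum_(i < n) \sum_(l < k) (eta i l * ln (eta i l) - eta i l * ln (gtheta h th i l))
     + 2 * norminf eps * norm1 th.
Proof.
have -> : \sum_(i < n) \sum_(l < k) (eta i l * ln (eta i l) - eta i l * ln (g i l)) =
  \sum_(i < n) \sum_(l < k) (eta i l * ln (eta i l) - eta i l * ln (gtheta h th i l))
  + \sum_(i < n) \sum_(l < k) (eta i l - g i l) * ln (gtheta h th i l)
  + \sum_(i < n) \sum_(l < k) (g i l * ln (gtheta h th i l) - g i l * ln (g i l))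
  - \sum_(i < n) \sum_(l < k) (eta i l - g i l) * ln (g i l).
  rewrite -!big_split -sumrB /=; apply: eq_bigr => i _.
  rewrite -!big_split -sumrB /=; apply: eq_bigr => l _; ring.
have [_ D0] := @step1 R n k p h b eps eta g Hg He.
have G0 := gibbs_sum.
have B := bound_lnG.
rewrite sum_lnG.
lra.
Qed.

End Bound.

Lemma dKL_Nny (R : realType) n k (mu nu : vecnk R n k) : (dKL mu nu != -oo)%E.
Proof.
rewrite /dKL; apply: (big_ind (fun x => x != -oo)%E) => //.
  by move=> x y hx hy; rewrite adde_eq_ninfty negb_or hx hy.
move=> i _; apply: (big_ind (fun x => x != -oo)%E) => //.
  by move=> x y hx hy; rewrite adde_eq_ninfty negb_or hx hy.
move=> l _; rewrite /kl_term; case: ifP => //; case: ifP => //.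
Qed.

Theorem lemma7 (R : realType) (n k p : nat) (h : rules n k p)
  (eta : vecnk R n k) (b eps thstar : vecm R k p) (gbf g_ds : vecnk R n k) :
  (1 <= n)%N -> (2 <= k)%N -> (1 <= p)%N ->
  (forall j, (1 <= nj h j)%N) ->
  in_simplex eta ->
  (forall r, 0 <= eps r) ->
  (forall r, b r - eps r <= Amul h eta r <= b r + eps r) ->
  (* d(eta, .) attains its minimum over G at g* = g^(thstar), thstar <> 0 *)
  (forall th : vecm R k p,
      (dKL eta (gtheta h thstar) <= dKL eta (gtheta h th))%E) ->
  thstar != (fun _ => 0) ->
  is_maxent h b eps gbf ->
  is_ocds h g_ds ->
  (* parameters of g^{ds star} = g^ds(w star, b star) lie in (0,1) *)
  (forall l, 0 < Amul h eta (inr l) < 1) ->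
  (forall j, 0 < Amul h eta (inl j) < 1) ->
  ((norminf eps)%:E <=
     (dKL eta (gds h (fun l => Amul h eta (inr l)) (fun j => Amul h eta (inl j)))
      - dKL eta (gtheta h thstar)
      + dKL eta g_ds
      - dKL eta (gds h (fun l => Amul h eta (inr l)) (fun j => Amul h eta (inl j))))
     * ((2 * norm1 thstar)^-1)%:E)%E ->
  (dKL eta gbf <= dKL eta g_ds)%E.
Proof.
move=> n1 k2 p1 hnj se eps0 Heb hmin thn0 Hbf Hds hw hb Heps.
have He : inP h b eps eta by split.
have k1 : (1 <= k)%N by apply: leq_trans k2.
have [z _] := @step1 R n k p h b eps eta gbf Hbf He.
have e0 i l : 0 <= eta i l by have [e0 _] := se i; apply: e0.
have g0 i l : 0 <= gbf i l by have [g0 _] := Hbf.1.1 i; apply: g0.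
rewrite (@dKL_real R n k _ _ e0 g0 z).
have Gp := @gth_gt0 R n k p h thstar k1.
rewrite (@dKL_real R n k _ _ e0 (fun i l => ltW (Gp i l))) in Heps; last first.
  by move=> i l Gz; have := Gp i l; rewrite Gz ltxx.
have MR := @main_real R n k p h b eps eta gbf thstar Hbf He k1.
set Sbf := \sum_(i < n) \sum_(l < k) _ in MR *.
set SG := \sum_(i < n) \sum_(l < k) _ in MR Heps.
set N := norm1 thstar in MR Heps.
have N0 : 0 < N.
  have Nge : 0 <= N by apply: sumr_ge0 => r _.
  rewrite lt_def Nge andbT; apply/eqP => NN; move/eqP: thn0; apply.
  apply: funext => r; apply/eqP; rewrite -normr_eq0; apply/eqP.
  by apply: (psumr_eq0P (fun r _ => normr_ge0 (thstar r)) NN).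
have ninf0 : 0 <= norminf eps.
  by apply: le_trans (@le_norminf R k p eps (inr (Ordinal k1))); apply: normr_ge0.
move: Heps.
set X := dKL eta (gds _ _ _).
have XN : (X != -oo)%E by apply: dKL_Nny.
have WN := @dKL_Nny R n k eta g_ds.
case: (dKL eta g_ds) WN => [w _| _ _|]; [ | by apply: leey | by rewrite eqxx].
rewrite -/X; case: X XN => [x _| _ |]; last by rewrite eqxx.
  rewrite -!EFinD -EFinM lee_fin => H.
  have H2 : norminf eps * (2 * N) <= w - SG.
    move: H; rewrite ler_pdivlMr; last lra.
    by have -> : x - SG + w - x = w - SG by ring.
  rewrite lee_fin; lra.
have c0 : (0 < ((2 * N)^-1)%:E)%E by rewrite lte_fin invr_gt0; lra.
rewrite /= gt0_mulNye //.
Qed.
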